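(* Let $f\colon\{0,1\}^n\to\{0,1\}$ be a total function with $f^{-1}(0)\neq\emptyset$. Then there exist a partial function $g\colon\{0,1\}^{2n}\to\{0,1,*\}$ and an input $z\in g^{-1}( * )$ such that \[ \min\{\mathrm{C}_{\bar 0}(g,z),\,\mathrm{C}_{\bar 1}(g,z)\}\;\ge\;\mathrm{C}_0(f)\qquad\text{and}\qquad\mathrm{C}(g)\;\le\;2\,\mathrm{UC}_1(f). \]
   Context: For a partial function $f\colon\{0,1\}^n\to\{0,1,*\}$: a partial input $\rho\in\{0,1,*\}^n$ is consistent with $x\in\{0,1\}^n$ if $\rho_i=x_i$ whenever $\rho_i\neq*$; its size $|\rho|$ is the number of non-$*$ entries. For $\Sigma\subseteq\{0,1,*\}$, $\rho$ is a $\Sigma$-certificate for $x$ if $\rho$ is consistent with $x$ and $f(x')\in\Sigma$ for all $x'$ consistent with $\rho$. $\mathrm{C}_\Sigma(f,x)$ is the least size of a $\Sigma$-certificate for $x$, and $\mathrm{C}_\Sigma(f)=\max_{x\in f^{-1}(\Sigma)}\mathrm{C}_\Sigma(f,x)$. We write $0,1,\bar0,\bar1$ for $\Sigma=\{0\},\{1\},\{1,*\},\{0,*\}$, and $\mathrm{C}(f)=\max\{\mathrm{C}_0(f),\mathrm{C}_1(f)\}$. For total $f$, $\mathrm{C}_0(f)$ is the least $k$ such that $f$ is a width-$k$ CNF, and $\mathrm{UC}_1(f)$ is the least $k$ such that $f$ can be written as an unambiguous width-$k$ DNF (every input satisfies at most one term; width = maximum number of literals in a term). *)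

(* Defs.v *)
From mathcomp Require Import all_boot.
Set Implicit Arguments. Unset Strict Implicit. Unset Printing Implicit Defensive.

(* Inputs x in {0,1}^n, partial inputs rho in {0,1,*}^n (None = * ),
   partial functions {0,1}^n -> {0,1,*} (None = * ). *)
Definition input (n : nat) := {ffun 'I_n -> bool}.
Definition pinput (n : nat) := {ffun 'I_n -> option bool}.

Definition consistent n (rho : pinput n) (x : input n) : bool :=
  [forall i, (rho i == None) || (rho i == Some (x i))].

Definition psize n (rho : pinput n) : nat := #|[set i | rho i != None]|.

Definition is_cert n (S : pred (option bool)) (f : input n -> option bool)
  (x : input n) (rho : pinput n) : bool :=
  consistent rho x && [forall x' : input n, consistent rho x' ==> (f x' \in S)].

(* C_Sigma(f,x): least size of a Sigma-certificate for x (meaningful when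
   f x \in S, in which case the full input is a certificate of size n). *)
Definition CSx n (S : pred (option bool)) (f : input n -> option bool)
  (x : input n) : nat :=
  \big[minn/n]_(rho : pinput n | is_cert S f x rho) psize rho.

Definition CS n (S : pred (option bool)) (f : input n -> option bool) : nat :=
  \max_(x : input n | f x \in S) CSx S f x.

Definition Sig0 : pred (option bool) := pred1 (Some false).
Definition Sig1 : pred (option bool) := pred1 (Some true).
Definition Sigb0 : pred (option bool) := [pred o | o != Some false].
Definition Sigb1 : pred (option bool) := [pred o | o != Some true].

Definition Ccomp n (f : input n -> option bool) : nat :=
  maxn (CS Sig0 f) (CS Sig1 f).

Definition tot n (f : input n -> bool) : input n -> option bool :=
  fun x => Some (f x).

(* DNF: a set of terms; a term is a partial input (its literals are the
   fixed coordinates); x satisfies the term iff it is consistent with it. *)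
Definition dnf_rep n (f : input n -> bool) (D : {set pinput n}) : bool :=
  [forall x : input n, f x == [exists t in D, consistent t x]].
Definition dnf_unamb n (D : {set pinput n}) : bool :=
  [forall x : input n, #|[set t in D | consistent t x]| <= 1].
Definition dnf_width n (D : {set pinput n}) : nat := \max_(t in D) psize t.

Definition has_udnf n (f : input n -> bool) (k : nat) : bool :=
  [exists D : {set pinput n}, [&& dnf_rep f D, dnf_unamb D & dnf_width D <= k]].

(* UC_1(f): least k with an unambiguous width-k DNF for f (always <= n,
   via the DNF of all minterms, hence the default n is never the answer
   by default only). *)
Definition UC1 n (f : input n -> bool) : nat :=
  \big[minn/n]_(k < n.+1 | has_udnf f k) k.

(* Main.v *)
Require Import Defs.
From mathcomp Require Import all_boot zify.
Set Implicit Arguments. Unset Strict Implicit. Unset Printing Implicit Defensive.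

Section Split.
Variable n : nat.
Lemma e2 : 2 * n = n + n. Proof. by rewrite mul2n addnn. Qed.
Definition lo (i : 'I_n) : 'I_(2 * n) := cast_ord (esym e2) (lshift n i).
Definition hi (i : 'I_n) : 'I_(2 * n) := cast_ord (esym e2) (rshift n i).
Definition pairF T (x y : 'I_n -> T) (j : 'I_(2 * n)) : T :=
  match split (cast_ord e2 j) with inl i => x i | inr i => y i end.
Lemma pairF_lo T (x y : 'I_n -> T) i : pairF x y (lo i) = x i.
Proof. by rewrite /pairF /lo cast_ordKV; change (lshift n i) with (unsplit (@inl _ 'I_n i)); rewrite unsplitK. Qed.
Lemma pairF_hi T (x y : 'I_n -> T) i : pairF x y (hi i) = y i.
Proof. by rewrite /pairF /hi cast_ordKV; change (rshift n i) with (unsplit (@inr 'I_n _ i)); rewrite unsplitK. Qed.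
Lemma ordP (j : 'I_(2 * n)) : (exists i, j = lo i) \/ (exists i, j = hi i).
Proof.
have : j = cast_ord (esym e2) (unsplit (split (cast_ord e2 j))) by rewrite splitK cast_ordK.
by case: (split _) => i ->; [left|right]; exists i.
Qed.
Lemma lo_inj : injective lo.
Proof. by move=> i k /(congr1 val) /= /val_inj. Qed.
Lemma hi_inj : injective hi.
Proof. move=> i k /(congr1 val) /= /eqP; rewrite eqn_add2l => /eqP; exact: val_inj. Qed.
Lemma lo_hi i k : lo i != hi k.
Proof. apply/eqP => /(congr1 val) /=; move: (ltn_ord i) => + H; rewrite H; by rewrite ltnNge leq_addr. Qed.

Definition lp T (w : {ffun 'I_(2 * n) -> T}) : {ffun 'I_n -> T} := [ffun i => w (lo i)].
Definition rp T (w : {ffun 'I_(2 * n) -> T}) : {ffun 'I_n -> T} := [ffun i => w (hi i)].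
Definition pr T (x y : {ffun 'I_n -> T}) : {ffun 'I_(2 * n) -> T} := [ffun j => pairF x y j].
Lemma lp_pr T (x y : {ffun 'I_n -> T}) : lp (pr x y) = x.
Proof. by apply/ffunP => i; rewrite !ffunE pairF_lo. Qed.
Lemma rp_pr T (x y : {ffun 'I_n -> T}) : rp (pr x y) = y.
Proof. by apply/ffunP => i; rewrite !ffunE pairF_hi. Qed.

Lemma consE (r : pinput (2 * n)) (w : input (2 * n)) :
  consistent r w = consistent (lp r) (lp w) && consistent (rp r) (rp w).
Proof.
apply/idP/andP.
  by move/forallP => H; split; apply/forallP => i; rewrite !ffunE; apply: H.
case=> /forallP H1 /forallP H2; apply/forallP => j.
by case: (ordP j) => [[i ->]|[i ->]]; [move: (H1 i)|move: (H2 i)]; rewrite !ffunE.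
Qed.

Lemma psize_split (r : pinput (2 * n)) : psize (lp r) + psize (rp r) <= psize r.
Proof.
rewrite /psize.
set A := [set i | lp r i != None]; set B := [set i | rp r i != None].
rewrite -(card_imset _ lo_inj) -(card_imset _ hi_inj).
rewrite -cardsUI.
have -> : lo @: A :&: hi @: B = set0.
  apply/setP => j; rewrite !inE; apply/negbTE/andP => [[/imsetP[i _ ->] /imsetP[k _ /eqP]]].
  by rewrite (negbTE (lo_hi i k)).
rewrite cards0 addn0; apply: subset_leq_card; apply/subsetP => j.
by rewrite !inE => /orP[/imsetP[i]|/imsetP[i]]; rewrite inE ffunE => + ->.
Qed.

Lemma psize_pr (a b : pinput n) : psize (pr a b) <= psize a + psize b.
Proof.
rewrite /psize.
apply: leq_trans (leq_add (leq_imset_card lo _) (leq_imset_card hi _)).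
apply: leq_trans (leq_card_setU _ _); apply: subset_leq_card; apply/subsetP => j.
rewrite !inE ffunE; case: (ordP j) => [[i ->]|[i ->]]; rewrite ?pairF_lo ?pairF_hi => H.
  by apply/orP; left; apply/imsetP; exists i; rewrite ?inE.
by apply/orP; right; apply/imsetP; exists i; rewrite ?inE.
Qed.
End Split.

Lemma consP n (r : pinput n) (x : input n) :
  reflect (forall i b, r i = Some b -> b = x i) (consistent r x).
Proof.
apply: (iffP forallP) => H i.
  by move=> b E; move: (H i); rewrite E /= => /eqP [].
by case E: (r i) => [b|] //=; rewrite (H i b E).
Qed.

Lemma CSx_le_n n S (f : input n -> option bool) x : CSx S f x <= n.
Proof.
rewrite /CSx; elim/big_ind: _ => // [a b Ha Hb|r _]; first by rewrite geq_min Ha.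
by rewrite /psize; apply: leq_trans (max_card _) _; rewrite card_ord.
Qed.

Lemma bigmin_le_seq (I : eqType) (r : seq I) (P : pred I) F idx i0 :
  i0 \in r -> P i0 -> \big[minn/idx]_(i <- r | P i) F i <= F i0.
Proof.
move=> + Pi0; elim: r => // h t IH; rewrite inE big_cons.
case/predU1P => [<-|it]; first by rewrite Pi0 geq_minl.
by case: ifP => _; [rewrite geq_min IH ?orbT | exact: IH].
Qed.

Lemma bigmin_le (I : finType) (P : pred I) F idx i0 :
  P i0 -> \big[minn/idx]_(i | P i) F i <= F i0.
Proof. by move=> H; apply: bigmin_le_seq => //; apply: mem_index_enum. Qed.

Lemma CSx_le_cert n S (f : input n -> option bool) x r :
  is_cert S f x r -> CSx S f x <= psize r.
Proof. by move=> H; apply: bigmin_le. Qed.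

Lemma CSx_ge n S (f : input n -> option bool) x m :
  m <= n -> (forall r, is_cert S f x r -> m <= psize r) -> m <= CSx S f x.
Proof. by move=> H1 H2; rewrite /CSx; elim/big_ind: _ => // a b Ha Hb; rewrite leq_min Ha. Qed.

Definition gT n (f : input n -> bool) (T : input n -> pinput n) (w : input (2 * n)) : option bool :=
  if f (lp w) then Some (~~ consistent (T (lp w)) (rp w)) else None.

Lemma lower n (f : input n -> bool) T
  (HT1 : forall x, consistent (T x) x)
  (HT2 : forall x y, f x -> consistent (T x) y -> f y) a (fa : f a = false)
  (S : pred (option bool)) (HS : S (Some false) = false \/ S (Some true) = false) :
  CSx Sig0 (tot f) a <= CSx S (gT f T) (pr a a).
Proof.
apply: CSx_ge; first by apply: leq_trans (CSx_le_n _ _ _) _; lia.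
move=> r /andP[cz /forallP cf].
set s : pinput n := [ffun i => if lp r i is Some b then Some b else rp r i].
move: cz; rewrite consE lp_pr rp_pr => /andP[/consP c1 /consP c2].
have psz : psize s <= psize r.
  apply: leq_trans (psize_split r); rewrite /psize.
  apply: leq_trans (leq_card_setU _ _); apply: subset_leq_card; apply/subsetP => i.
  by rewrite !inE ffunE; case: (lp r i).
have csa : consistent s a.
  by apply/consP => i b; rewrite ffunE; case E: (lp r i) => [b'|]; [case=> <-; apply: c1|apply: c2].
case: (boolP [forall u, consistent s u ==> (tot f u \in Sig0)]) => H.
  by apply: leq_trans psz; apply: CSx_le_cert; rewrite /is_cert csa H.
exfalso; move: H => /forallPn [u]; rewrite negb_imply => /andP[/consP cu fu].
have fu1 : f u by move: fu; rewrite /tot inE; case: (f u).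
have cl : consistent (lp r) u.
  apply/consP => i b E; apply: cu; by rewrite ffunE E.
have cr : consistent (rp r) u.
  apply/consP => i b E; case E': (lp r i) => [b'|].
    by rewrite (c2 _ _ E) -(c1 _ _ E'); apply: cu; rewrite ffunE E'.
  by apply: cu; rewrite ffunE E' E.
have cuu : consistent r (pr u u) by rewrite consE lp_pr rp_pr cl cr.
have cua : consistent r (pr u a) by rewrite consE lp_pr rp_pr cl; apply/consP.
move: (cf (pr u u)) (cf (pr u a)); rewrite cuu cua /= /gT !lp_pr !rp_pr fu1 HT1 /=.
have -> : consistent (T u) a = false by apply/negbTE/negP => /(HT2 _ _ fu1); rewrite fa.
by rewrite -!topredE /=; case: HS => ->.
Qed.


Definition fullx n (x : input n) : pinput n := [ffun i => Some (x i)].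

Lemma fullx_cons n (x : input n) : consistent (fullx x) x.
Proof. by apply/consP => i b; rewrite ffunE => -[]. Qed.

Lemma fullx_eq n (x y : input n) : consistent (fullx x) y -> x = y.
Proof. by move/consP => H; apply/ffunP => i; apply: H; rewrite ffunE. Qed.

Definition TD n (D : {set pinput n}) (x : input n) : pinput n :=
  if [pick t in D | consistent t x] is Some t then t else fullx x.

Lemma Ccomp_le n (f : input n -> bool) T : Ccomp (gT f T) <= 2 * n.
Proof.
by rewrite /Ccomp geq_max; apply/andP; split; apply/bigmax_leqP => w _; apply: CSx_le_n.
Qed.

Section Upper.
Variables (n k : nat) (f : input n -> bool) (D : {set pinput n}).
Hypotheses (rep : dnf_rep f D) (un : dnf_unamb D) (wid : dnf_width D <= k).

Lemma TD_in x : f x -> TD D x \in D /\ consistent (TD D x) x.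
Proof.
move: rep => /forallP /(_ x) /eqP -> /existsP [t /andP[tD ct]].
rewrite /TD; case: pickP => [t' /andP[]|/(_ t)] //; by rewrite tD ct.
Qed.

Lemma TD_cons x : consistent (TD D x) x.
Proof.
rewrite /TD; case: pickP => [t' /andP[]|] //= _; exact: fullx_cons.
Qed.

Lemma rep_in t x : t \in D -> consistent t x -> f x.
Proof.
move=> tD ct; move: rep => /forallP /(_ x) /eqP ->; apply/existsP; exists t; by rewrite tD.
Qed.

Lemma TD_HT2 x y : f x -> consistent (TD D x) y -> f y.
Proof. by move=> fx; case: (TD_in fx) => tD _; apply: rep_in. Qed.

Lemma uniqD t1 t2 x : t1 \in D -> t2 \in D -> consistent t1 x -> consistent t2 x -> t1 = t2.
Proof.
move=> D1 D2 c1 c2; move: un => /forallP /(_ x) /card_le1_eqP H.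
by apply: H; rewrite inE ?D1 ?D2 ?c1 ?c2.
Qed.

Lemma key t x : t \in D -> consistent t x -> f x /\ TD D x = t.
Proof.
move=> tD ct; have fx := rep_in tD ct; split => //.
case: (TD_in fx) => D1 c1; exact: uniqD D1 tD c1 ct.
Qed.

Lemma upper : Ccomp (gT f (TD D)) <= 2 * k.
Proof.
rewrite /Ccomp geq_max; apply/andP; split; apply/bigmax_leqP => w;
  rewrite /gT -topredE /=; case fx: (f (lp w)) => //=;
  case: (TD_in fx) => tD ct; set t := TD D (lp w) in tD ct *;
  have pt : psize t <= k by apply: leq_trans wid; exact: (leq_bigmax_cond t tD).
- rewrite /Sig0 /= => /eqP [] /negbFE cy.
  apply: leq_trans (CSx_le_cert (r := pr t t) _) _.
    rewrite /is_cert consE lp_pr rp_pr ct cy /=; apply/forallP => w'.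
    rewrite consE lp_pr rp_pr; apply/implyP => /andP[c1 c2].
    case: (key tD c1) => -> ->; by rewrite c2.
  by apply: leq_trans (psize_pr _ _) _; lia.
- rewrite /Sig1 /= => /eqP [] /negP H.
  case: (boolP [forall i, (t i == None) || (t i == Some (rp w i))]) => [Hf|]; first by case: H.
  move=> /forallPn [i]; rewrite negb_or => /andP[ti ty].
  set s : pinput n := [ffun j => if j == i then Some (rp w i) else None].
  have ps : psize s <= 1.
    rewrite /psize -(cards1 i); apply: subset_leq_card; apply/subsetP => j.
    by rewrite !inE ffunE; case: (j == i).
  have pt1 : 0 < psize t by apply/card_gt0P; exists i; rewrite inE.
  apply: leq_trans (CSx_le_cert (r := pr t s) _) _.
    rewrite /is_cert consE lp_pr rp_pr ct /=; apply/andP; split.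
      by apply/consP => j b; rewrite ffunE; case: eqP => // -> [].
    apply/forallP => w'; rewrite consE lp_pr rp_pr; apply/implyP => /andP[c1 /consP c2].
    case: (key tD c1) => -> ->; rewrite -topredE /=; apply/eqP; congr Some.
    apply/negP => /consP H2; move: ti ty; case E: (t i) => [b|] // _.
    by rewrite (H2 _ _ E) -(c2 i (rp w i)) ?ffunE ?eqxx.
  by apply: leq_trans (psize_pr _ _) _; lia.
Qed.
End Upper.

Theorem theorem2p2 (n : nat) (f : input n -> bool) :
  (exists x : input n, f x = false) ->
  exists (g : input (2 * n) -> option bool) (z : input (2 * n)),
    g z = None /\
    CS Sig0 (tot f) <= minn (CSx Sigb0 g z) (CSx Sigb1 g z) /\
    Ccomp g <= 2 * UC1 f.
Proof.
move=> [a0 fa0].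
have [a fa HCS] : exists2 a, f a = false & CS Sig0 (tot f) = CSx Sig0 (tot f) a.
  have P0 : tot f a0 \in Sig0 by rewrite -topredE /= /tot fa0.
  exists [arg max_(x > a0 | tot f x \in Sig0) CSx Sig0 (tot f) x]; last exact: bigmax_eq_arg.
  case: arg_maxnP => // x; rewrite -topredE /= /tot => /eqP [] -> //.
suff main : forall T, (forall x, consistent (T x) x) ->
    (forall x y, f x -> consistent (T x) y -> f y) ->
    Ccomp (gT f T) <= 2 * UC1 f ->
  exists (g : input (2 * n) -> option bool) (z : input (2 * n)),
    g z = None /\
    CS Sig0 (tot f) <= minn (CSx Sigb0 g z) (CSx Sigb1 g z) /\
    Ccomp g <= 2 * UC1 f.
  case: (boolP [exists k : 'I_n.+1, has_udnf f k]).
    case/existsP => k0 Hk0.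
    case: (@arg_minnP _ k0 (fun k => has_udnf f k) (fun k : 'I_n.+1 => nat_of_ord k) Hk0) => k Hk Hmin.
    move: (Hk) => /existsP [D /and3P[rep un wid]].
    apply: (main (TD D)); first exact: TD_cons.
      by move=> x y; apply: TD_HT2.
    apply: leq_trans (upper rep un wid) _; rewrite leq_mul2l /= /UC1.
    elim/big_ind: _ => //; first by rewrite -ltnS.
    by move=> p q Hp Hq; rewrite leq_min Hp.
  move=> H; apply: (main (@fullx n)); first exact: fullx_cons.
    by move=> x y fx /fullx_eq <-.
  apply: leq_trans (Ccomp_le _ _) _; rewrite leq_mul2l /= /UC1.
  elim/big_ind: _ => //; first by move=> p q Hp Hq; rewrite leq_min Hp.
  by move=> i Hi; case/existsP: H; exists i.
move=> T HT1 HT2 HC; exists (gT f T), (pr a a); split.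
  by rewrite /gT lp_pr fa.
split => //; rewrite HCS leq_min; apply/andP; split; apply: lower => //.
  by left.
by right.
Qed.
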